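(* Let $G=K(n_1,\dots,n_s)$ be a complete $s$-partite graph ($s\ge 2$) with parts $V_1,\dots,V_s$, $|V_j|=n_j$. If $j\in\{1,\dots,s\}$ satisfies $n_j\ge 6$, then $\chi_3(G)=\chi_3(G-V_j)+1$.
   Context: A map $f:V(G)\to\{1,\dots,k\}$ is a $3$-relaxed $k$-coloring if every vertex $u$ has at most $3$ neighbors $v$ with $f(v)=f(u)$; $\chi_3(G)$ is the minimum $k$ for which such a coloring exists. $G-V_j$ is the graph obtained by deleting the vertices of $V_j$. *)

(* Defs.v *)
From mathcomp Require Import all_boot.
Set Implicit Arguments. Unset Strict Implicit. Unset Printing Implicit Defensive.

(* A simple graph is an irreflexive symmetric relation e on a finType T;
   induced subgraphs are given by a vertex set A : {set T}. *)

Definition relaxed3 (T : finType) (e : rel T) (A : {set T}) (k : nat)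
  (f : T -> 'I_k) : bool :=
  [forall u in A, #|[set v in A | e u v && (f v == f u)]| <= 3].

Definition colorable3 (T : finType) (e : rel T) (A : {set T}) (k : nat) : bool :=
  [exists f : {ffun T -> 'I_k}, relaxed3 e A f].

Lemma colorable3_ex (T : finType) (e : rel T) (A : {set T}) :
  exists k, colorable3 e A k.
Proof.
exists #|T|; apply/existsP; exists [ffun u => enum_rank u].
apply/forallP=> u; apply/implyP=> _.
apply: (@leq_trans 1) => //.
have -> : #|[set v in A | e u v && ([ffun u => enum_rank u] v == [ffun u => enum_rank u] u)]|
         = #|[set v in A | e u v && (v == u)]|.
  by apply: eq_card => v; rewrite !inE !ffunE (inj_eq enum_rank_inj).
rewrite -(cards1 u); apply: subset_leq_card; apply/subsetP=> v.
by rewrite !inE => /andP[_ /andP[_ ->]].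
Qed.

Definition chi3 (T : finType) (e : rel T) (A : {set T}) : nat :=
  ex_minn (colorable3_ex e A).

(* Complete s-partite graph K(n_0, ..., n_{s-1}): vertices are pairs (i, x)
   with x in part V_i of size n i; two vertices are adjacent iff they lie in
   different parts. *)
Definition cmp_vertex (s : nat) (n : 'I_s -> nat) : finType :=
  {i : 'I_s & 'I_(n i)}.

Definition cmp_adj (s : nat) (n : 'I_s -> nat) : rel (cmp_vertex n) :=
  fun u v => tag u != tag v.

Definition part (s : nat) (n : 'I_s -> nat) (j : 'I_s) : {set cmp_vertex n} :=
  [set v | tag v == j].
Arguments cmp_vertex : clear implicits.
Arguments cmp_adj : clear implicits.
Arguments part : clear implicits.

(* Main.v *)
Require Import Defs.
From mathcomp Require Import all_boot.
From mathcomp Require Import zify.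
Set Implicit Arguments. Unset Strict Implicit. Unset Printing Implicit Defensive.

Lemma compress (T : finType) (e : rel T) (A : {set T}) k k' (g : T -> 'I_k) :
  relaxed3 e A g -> #|g @: A| <= k' -> 0 < k' -> colorable3 e A k'.
Proof.
case: k' => // k' Hg Hc _.
set S := g @: A.
pose h (c : 'I_k) : 'I_k'.+1 := inord (index c (enum S)).
have hinj : {in S &, injective h}.
  move=> c d cS dS /(congr1 (@nat_of_ord _)); rewrite /h !inordK; last first.
  - by apply: leq_trans Hc; rewrite cardE index_mem mem_enum.
  - by apply: leq_trans Hc; rewrite cardE index_mem mem_enum.
  move=> E; have := nth_index c (s:=enum S); move=> Hn; by rewrite -(Hn c) ?mem_enum // E Hn ?mem_enum.
apply/existsP; exists [ffun v => h (g v)].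
apply/forallP=> u; apply/implyP=> uA.
move/forallP: Hg => /(_ u); rewrite uA /= => Hu.
apply: leq_trans Hu; apply: subset_leq_card; apply/subsetP=> v.
rewrite !inE !ffunE => /andP[vA /andP[euv /eqP E]].
rewrite vA euv /=; apply/eqP; apply: hinj E; by apply: imset_f.
Qed.

Lemma build (T : finType) (e : rel T) k (f : T -> 'I_k) (W : {set T})
  (C : {set 'I_k}) b (g : T -> 'I_k) :
  relaxed3 e setT f -> b \in C ->
  (forall v, v \in W -> f v \notin C -> g v = f v) ->
  (forall v, v \in W -> f v \in C -> g v \in C :\ b) ->
  (forall u, u \in W -> f u \in C -> #|[set v in W | e u v && (g v == g u)]| <= 3) ->
  relaxed3 e W g /\ #|g @: W| <= k.-1.
Proof.
move=> Hf bC H1 H2 H3; split.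
  apply/forallP=> u; apply/implyP=> uW.
  case: (boolP (f u \in C)) => fuC; first exact: H3.
  move/forallP: Hf => /(_ u); rewrite inE /= => Hu.
  apply: leq_trans Hu; apply: subset_leq_card; apply/subsetP=> v.
  rewrite !inE => /andP[vW /andP[euv /eqP E]]; rewrite euv /=.
  rewrite (H1 u uW fuC) in E.
  case: (boolP (f v \in C)) => fvC.
    by have := H2 v vW fvC; rewrite E inE (negbTE fuC) andbF.
  by rewrite -(H1 v vW fvC) E.
have sub : g @: W \subset (~: C) :|: (C :\ b).
  apply/subsetP=> c /imsetP[v vW ->]; rewrite inE.
  case: (boolP (f v \in C)) => fvC; first by rewrite H2 ?orbT.
  by rewrite H1 // inE fvC.
apply: leq_trans (subset_leq_card sub) _.
apply: leq_trans (leq_card_setU _ _) _.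
have h1 : #|C| + #|~: C| = k by rewrite cardsC card_ord.
have h2 : #|C| = #|C :\ b|.+1 by rewrite (cardsD1 b C) bC.
move: h1 h2; set x := #|~: C|; set y := #|C :\ b|; set z := #|C|.
move: x y z => x y z; lia.
Qed.

Lemma chunk (T : finType) k (R : {set T}) (P : {set 'I_k}) (d : 'I_k) :
  #|R| <= 4 * #|P| -> exists h : T -> 'I_k,
  (forall v, v \in R -> h v \in P) /\
  (forall u, u \in R -> #|[set v in R | h v == h u]| <= 4).
Proof.
move=> HR.
pose idx v := index v (enum R).
have idxlt : forall v, v \in R -> idx v %/ 4 < size (enum P).
  move=> v vR; rewrite -cardE ltn_divLR // mulnC.
  apply: leq_trans HR; by rewrite cardE index_mem mem_enum.
exists (fun v => nth d (enum P) (idx v %/ 4)); split.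
  by move=> v vR; rewrite -mem_enum mem_nth // idxlt.
move=> u uR.
pose m (v : T) : 'I_4 := Ordinal (ltn_pmod (idx v) (isT : 0 < 4)).
have -> : #|[set v in R | nth d (enum P) (idx v %/ 4) == nth d (enum P) (idx u %/ 4)]|
   = #|[set v in R | idx v %/ 4 == idx u %/ 4]|.
  apply: eq_card => v; rewrite !inE.
  case: (boolP (v \in R)) => //= vR.
  by rewrite nth_uniq ?idxlt ?enum_uniq.
apply: (@leq_trans #|'I_4|); last by rewrite card_ord.
apply: (leq_card_in m).
move=> v w; rewrite !inE => /andP[vR /eqP Ev] /andP[wR /eqP Ew] /(congr1 val) /= Em.
have : idx v = idx w by rewrite (divn_eq (idx v) 4) (divn_eq (idx w) 4) Em Ev Ew.
move=> E; have Hn := nth_index v (s := enum R).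
by rewrite -(Hn v) ?mem_enum // -/(idx v) E /idx Hn ?mem_enum.
Qed.

Lemma extend (T : finType) (I : eqType) (tg : T -> I) (e : rel T)
  (He : forall u v, e u v = (tg u != tg v)) (j : I) k (g : T -> 'I_k) :
  relaxed3 e (~: [set v | tg v == j]) g -> colorable3 e setT k.+1.
Proof.
move=> Hg.
apply/existsP; exists [ffun v => if tg v == j then ord_max else widen_ord (leqnSn k) (g v)].
apply/forallP=> u; rewrite inE /=.
case: (boolP (tg u == j)) => uj.
  apply: leq_trans (_ : #|(set0 : {set T})| <= 3); last by rewrite cards0.
  apply: subset_leq_card; apply/subsetP=> v; rewrite !inE !ffunE He (eqP uj) eqxx.
  case: ifP => vj; first by rewrite (eqP vj) eqxx.
  move=> /and3P[_ _ /eqP E]; move: (congr1 (@nat_of_ord _) E) => /= E'.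
  have := ltn_ord (g v); lia.
move/forallP: Hg => /(_ u); rewrite !inE uj /= => Hu.
apply: leq_trans Hu; apply: subset_leq_card; apply/subsetP=> v.
rewrite !inE !ffunE (negbTE uj) /=.
case: ifP => vj /andP[euv /eqP E].
  by move: (congr1 (@nat_of_ord _) E) => /= E'; have := ltn_ord (g u); lia.
rewrite euv /=; apply/eqP; apply: val_inj; exact: (congr1 (@nat_of_ord _) E).
Qed.
Lemma card_fibers (T : finType) k (f : T -> 'I_k) (X : {set T}) (D : {set 'I_k}) :
  (forall v, v \in X -> f v \in D) ->
  #|X| = \sum_(c in D) #|[set v in X | f v == c]|.
Proof.
move=> HX; rewrite -sum1_card (partition_big f (mem D)) //=.
apply: eq_bigr => c _; rewrite -sum1_card; apply: eq_bigl => v; by rewrite inE.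
Qed.

Lemma reduce (T : finType) (I : eqType) (tg : T -> I) (e : rel T)
  (He : forall u v, e u v = (tg u != tg v)) (j : I) k (f : T -> 'I_k) :
  relaxed3 e setT f -> 6 <= #|[set v | tg v == j]| ->
  exists g : T -> 'I_k, relaxed3 e (~: [set v | tg v == j]) g /\
    #|g @: (~: [set v | tg v == j])| <= k.-1.
Proof.
move=> Hf HV.
set V := [set v | tg v == j] in HV *; set W := ~: V; set C := f @: V.
have inV v : (v \in V) = (tg v == j) by rewrite inE.
have inW v : (v \in W) = (tg v != j) by rewrite !inE.
pose Aj c := [set v in V | f v == c]; pose Ao c := [set v in W | f v == c].
pose U := [set v in W | f v \in C].
have confsub : forall u (Y : {set T}),
    (forall v, v \in Y -> e u v && (f v == f u)) -> #|Y| <= 3.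
  move=> u Y HY; move/forallP: Hf => /(_ u); rewrite in_setT /= => Hu.
  apply: leq_trans Hu; apply: subset_leq_card; apply/subsetP => v vY.
  by rewrite inE in_setT /= HY.
have F2 : forall c, c \in C -> #|Ao c| <= 3.
  move=> c /imsetP[w wV ->]; apply: (confsub w) => v.
  rewrite !inE => /andP[vW /eqP ->]; rewrite eqxx andbT He.
  rewrite inV in wV; rewrite (eqP wV) eq_sym; exact: vW.
have F4 : forall c x, x \in Ao c ->
    #|Aj c| + #|[set v in Ao c | tg v != tg x]| <= 3.
  move=> c x; rewrite inE => /andP[xW /eqP fx].
  rewrite -cardsUI.
  have -> : Aj c :&: [set v in Ao c | tg v != tg x] = set0.
    apply/setP => v; rewrite !inE; case: (tg v == j); by rewrite ?andbF.
  rewrite cards0 addn0; apply: (confsub x) => v; rewrite !inE He fx.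
  case/orP => [/andP[vV ->] | /andP[/andP[_ ->] nx]]; last by rewrite eq_sym nx.
  rewrite andbT; rewrite inW in xW; rewrite (eqP vV); exact: xW.
have F3 : forall c x, x \in Ao c -> #|Aj c| <= 3.
  by move=> c x /F4; apply: leq_trans; apply: leq_addr.
have S1 : #|V| = \sum_(c in C) #|Aj c|.
  by rewrite (card_fibers (f:=f) (X:=V) (D:=C)) // => v vV; apply: imset_f.
have S2 : #|U| = \sum_(c in C) #|Ao c|.
  rewrite (card_fibers (f:=f) (D := C)); last by move=> v; rewrite inE => /andP[].
  apply: eq_bigr => c cC; apply: eq_card => v; rewrite !inE.
  by case: (f v =P c) => [->|]; rewrite ?cC ?andbT ?andbF.
have fvC : forall v, v \in V -> f v \in C by move=> v vV; apply: imset_f.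
case: (boolP [exists c in C, Ao c == set0]) => [/existsP[b /andP[bC /eqP Ab]] | Hmix].
  exists f; apply: (build (b := b) Hf bC) => //.
  - move=> v vW fC; rewrite !inE fC andbT; apply/eqP => fb.
    have : v \in Ao b by rewrite inE vW fb eqxx.
    by rewrite Ab inE.
  - move=> u uW _; apply: (confsub u) => v; rewrite inE => /andP[_ ->] //.
have Hne : forall c, c \in C -> exists x, x \in Ao c.
  move=> c cC; move/existsPn: Hmix => /(_ c); rewrite cC /= => /set0Pn[x xA].
  by exists x.
have T3 : forall c, c \in C -> #|Aj c| <= 3.
  by move=> c /Hne[x /F3].
pose B := [set c in C | (#|Aj c| == 3) || ((#|Ao c| == 3) && (2 <= #|Aj c|))].
have sp : forall c, c \in B -> forall x y, x \in Ao c -> y \in Ao c -> tg x = tg y.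
  move=> c; rewrite inE => /andP[cC Hc] x y xA yA.
  apply/eqP; apply/negPn/negP => nxy.
  have F4x := F4 c x xA; have F4y := F4 c y yA.
  have c1 : 0 < #|[set v in Ao c | tg v != tg x]|.
    by apply/card_gt0P; exists y; rewrite inE yA eq_sym.
  case/orP: Hc => [/eqP t3 | /andP[/eqP x3 t2]]; first by lia.
  have sub : Ao c \subset [set v in Ao c | tg v != tg x] :|: [set v in Ao c | tg v != tg y].
    apply/subsetP => v vA; rewrite !inE; move: vA; rewrite !inE => /andP[-> ->] /=.
    by case: (tg v =P tg x) => [->|] //=; rewrite nxy.
  have := subset_leq_card sub; have := leq_of_leqif (leq_card_setU [set v in Ao c | tg v != tg x] [set v in Ao c | tg v != tg y]).
  move: F4x F4y x3 t2.
  set a1 := #|[set v in Ao c | tg v != tg x]|; set a2 := #|[set v in Ao c | tg v != tg y]|.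
  set a3 := #|_ :|: _|; set a4 := #|Ao c|; set a5 := #|Aj c|.
  lia.
have BC : forall c, c \in B -> c \in C by move=> c; rewrite inE => /andP[].
have AoC : forall c v, v \in Ao c -> c \in C -> f v \in C.
  by move=> c v; rewrite inE => /andP[_ /eqP ->].
have AoW : forall c v, v \in Ao c -> v \in W by move=> c v; rewrite inE => /andP[].
have Aof : forall c v, v \in Ao c -> f v = c by move=> c v; rewrite inE => /andP[_ /eqP].
case: (boolP [exists a in B, exists b in B, a != b]) => [HB | HB].
  case/existsP: HB => a /andP[aB /existsP[b /andP[bB ab]]].
  have aC := BC a aB; have bC := BC b bB.
  pose M := Ao a :|: Ao b; pose R := U :\: M; pose P := C :\ a :\ b.
  have inM v : (v \in M) = (v \in Ao a) || (v \in Ao b) by rewrite inE.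
  have fM : forall v, v \in M -> (f v == a) || (f v == b).
    by move=> v; rewrite inM => /orP[/Aof -> | /Aof ->]; rewrite eqxx ?orbT.
  have fR : forall v, v \in R -> f v \in P.
    move=> v; rewrite !inE => /andP[nM /andP[vW fC]].
    by rewrite fC andbT; move: nM; rewrite vW /= => /norP[-> ->].
  have HR : #|R| <= 4 * #|P|.
    rewrite (card_fibers (f:=f) (X:=R) (D:=P)) //.
    apply: (@leq_trans (\sum_(c in P) 3)); last by rewrite sum_nat_const mulnC leq_mul2r orbT.
    apply: leq_sum => c cP; apply: leq_trans (F2 c _); last by move: cP; rewrite !inE => /and3P[].
    apply: subset_leq_card; apply/subsetP => v; rewrite !inE => /andP[/andP[_ /andP[->]]] //.
  have [h [hP hfib]] := chunk a HR.
  have PC : forall c, c \in P -> c \in C :\ b.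
    by move=> c; rewrite !inE => /and3P[-> _ ->].
  have aP : a \notin P by rewrite !inE eqxx andbF.
  have inR v : v \in W -> f v \in C -> v \notin M -> v \in R.
    by move=> vW fC nM; rewrite in_setD nM /= inE vW fC.
  exists (fun v => if v \in M then a else if f v \in C then h v else f v).
  apply: (build (b := b) Hf bC).
  - move=> v vW fC; case: ifP => // vM.
      by case/orP: (fM v vM) => /eqP E; move: fC; rewrite E ?aC ?bC.
    by rewrite (negbTE fC).
  - move=> v vW fC; case: ifP => vM; first by rewrite !inE ab aC.
    by rewrite fC; apply: PC; apply: hP; apply: inR => //; rewrite vM.
  move=> u uW fuC; case: ifP => uM.
    have conf : forall v, v \in W -> e u v -> (if v \in M then a else if f v \in C then h v else f v) == a -> v \in M /\ tg v != tg u.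
      move=> v vW euv; rewrite He eq_sym in euv; case: ifP => vM; first by [].
      case: ifP => fC /eqP E.
        by move: (hP v (inR v vW fC (negbT vM))); rewrite E (negbTE aP).
      by move: fC; rewrite E aC.
    move: (uM); rewrite inM => /orP[uA|uA].
    + apply: leq_trans (F2 b bC); apply: subset_leq_card; apply/subsetP => v.
      rewrite inE => /andP[vW /andP[euv /(conf v vW euv)[vM nt]]].
      move: vM; rewrite inM => /orP[vA|] //.
      by move: nt; rewrite (sp a aB v u vA uA) eqxx.
    + apply: leq_trans (F2 a aC); apply: subset_leq_card; apply/subsetP => v.
      rewrite inE => /andP[vW /andP[euv /(conf v vW euv)[vM nt]]].
      move: vM; rewrite inM => /orP[|vA] //.
      by move: nt; rewrite (sp b bB v u vA uA) eqxx.
  rewrite fuC.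
  have uR := inR u uW fuC (negbT uM).
  have Y3 : #|[set v in R | h v == h u] :\ u| <= 3.
    have := hfib u uR; rewrite (cardsD1 u [set v in R | h v == h u]).
    have -> : u \in [set v in R | h v == h u] by rewrite inE uR eqxx.
    by rewrite add1n.
  apply: leq_trans Y3; apply: subset_leq_card; apply/subsetP => v.
  rewrite inE => /andP[vW /andP[euv]].
  case: ifP => vM /eqP E.
    by move: (hP u uR); rewrite -E (negbTE aP).
  case: ifP E => fC E.
    rewrite in_setD1 in_set (inR v vW fC (negbT vM)) E eqxx andbT.
    rewrite andbT; apply/negP => /eqP vu; move: euv; by rewrite vu He eqxx.
  by move: (PC _ (hP u uR)); rewrite -E !inE fC andbF.
have [v0 v0V] : exists v, v \in V by apply/card_gt0P; apply: leq_trans HV.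
have b0C := fvC v0 v0V; set b0 := f v0 in b0C.
have term4 : forall c, c \in C -> c \notin B -> #|Ao c| + #|Aj c| <= 4.
  move=> c cC; have := F2 c cC; have := T3 c cC.
  rewrite inE cC /= negb_or negb_and => h1 h2 /andP[/eqP h3 /orP[/eqP h4|h4]]; first by lia.
  by rewrite -ltnNge in h4; lia.
have term6 : forall c, c \in C -> #|Ao c| + #|Aj c| <= 6.
  by move=> c cC; have := F2 c cC; have := T3 c cC; lia.
have Hsum : \sum_(c in C) (#|Ao c| + #|Aj c|) <= 4 * #|C| + 2.
  case: (set_0Vmem B) => [B0 | [b1 b1B]].
    apply: (@leq_trans (\sum_(c in C) 4)).
      by apply: leq_sum => c cC; apply: term4 => //; rewrite B0 inE.
    by rewrite sum_nat_const; lia.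
  have b1C := BC _ b1B.
  rewrite (bigD1 b1) //=.
  apply: (@leq_trans (6 + \sum_(c in C | c != b1) 4)).
    apply: leq_add; first exact: term6.
    apply: leq_sum => c /andP[cC cb]; apply: term4 => //; apply/negP => cB.
    move/negP: HB; apply; apply/existsP; exists c; rewrite cB /=.
    by apply/existsP; exists b1; rewrite b1B cb.
  have E4 : \sum_(c in C) 4 = 4 + \sum_(c in C | c != b1) 4 := bigD1 b1 b1C.
  by rewrite sum_nat_const mulnC in E4; rewrite E4 addnAC.
rewrite big_split /= -S1 -S2 in Hsum.
have HU : #|U| <= 4 * #|C :\ b0|.
  have := cardsD1 b0 C; rewrite b0C add1n => Ec; move: Hsum HV; rewrite Ec.
  move: #|U| #|V| #|C :\ b0| => x y z; lia.
have [h [hP hfib]] := chunk b0 HU.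
exists (fun v => if f v \in C then h v else f v).
apply: (build (b := b0) Hf b0C).
- by move=> v vW fC; rewrite (negbTE fC).
- by move=> v vW fC; rewrite fC; apply: hP; rewrite inE vW fC.
move=> u uW fuC; rewrite fuC.
have uU : u \in U by rewrite inE uW fuC.
have Y3 : #|[set v in U | h v == h u] :\ u| <= 3.
  have := hfib u uU; rewrite (cardsD1 u [set v in U | h v == h u]).
  have -> : u \in [set v in U | h v == h u] by rewrite inE uU eqxx.
  by rewrite add1n.
apply: leq_trans Y3; apply: subset_leq_card; apply/subsetP => v.
rewrite inE => /andP[vW /andP[euv]].
case: ifP => fC /eqP E.
  rewrite in_setD1 in_set E eqxx andbT.
  have -> : v \in U by rewrite inE vW fC.
  rewrite andbT; apply/negP => /eqP vu; move: euv; by rewrite vu He eqxx.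
by move: (hP u uU); rewrite -E !inE fC andbF.
Qed.

Theorem corollary5p2 (s : nat) (n : 'I_s -> nat) (j : 'I_s) :
  2 <= s -> (forall i, 0 < n i) -> 6 <= n j ->
  chi3 (cmp_adj s n) [set: cmp_vertex s n] =
  chi3 (cmp_adj s n) (~: part s n j) + 1.
Proof.
move=> s2 npos nj.
have He : forall u v, cmp_adj s n u v = (tag u != tag v) by [].
have HV : 6 <= #|[set v : cmp_vertex s n | tag v == j]|.
  have inj : injective (fun x : 'I_(n j) => Tagged (fun i => 'I_(n i)) x).
    move=> x y /(congr1 (tagged_as (Tagged (fun i => 'I_(n i)) x))).
    by rewrite !tagged_asE.
  apply: leq_trans nj _; rewrite -{1}(card_ord (n j)) -(card_imset _ inj).
  apply: subset_leq_card; apply/subsetP => v /imsetP[x _ ->]; by rewrite inE.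
have [i ij] : exists i : 'I_s, i != j.
  have s0 : 0 < s by apply: leq_trans s2.
  case: (eqVneq (nat_of_ord j) 0) => Hj.
    exists (Ordinal s2); apply/eqP => /(congr1 val) /=; rewrite Hj.
    by [].
  exists (Ordinal s0); apply/eqP => /(congr1 val) /= E; by rewrite -E eqxx in Hj.
pose w : cmp_vertex s n := Tagged (fun i => 'I_(n i)) (Ordinal (npos i)).
rewrite /chi3 /part.
case: (ex_minnP (colorable3_ex (cmp_adj s n) (~: [set v | tag v == j]))) => m Hm Hmin.
case: (ex_minnP (colorable3_ex (cmp_adj s n) [set: cmp_vertex s n])) => k Hk Hkmin.
apply/eqP; rewrite eqn_leq; apply/andP; split.
  rewrite addn1; apply: Hkmin.
  case/existsP: Hm => g Hg.
  exact: (extend (tg := fun v : cmp_vertex s n => tag v) He Hg).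
case/existsP: Hk => f Hf.
have [g [Hg Himg]] := reduce (tg := fun v : cmp_vertex s n => tag v) He Hf HV.
have k2 : 1 < k.
  rewrite ltnNge; apply/negP => k1.
  have allEq : forall a b : 'I_k, a = b.
    move=> a b; apply: ord_inj; have := ltn_ord a; have := ltn_ord b; lia.
  move/forallP: Hf => /(_ w); rewrite in_setT /= => Hw.
  have : #|[set v : cmp_vertex s n | tag v == j]| <= 3.
    apply: leq_trans Hw; apply: subset_leq_card; apply/subsetP => v.
    rewrite !inE He (allEq (f v) (f w)) eqxx andbT => /eqP ->; exact: ij.
  move: HV; move: #|[set v : cmp_vertex s n | tag v == j]| => x; lia.
have := Hmin _ (compress Hg Himg _); rewrite addn1.
have kpos : 0 < k.-1 by lia.
move=> /(_ kpos); lia.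
Qed.
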